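(* Let $T$ be a metric tree with uniform branch growth. If $T'$ is a metric space quasisymmetrically homeomorphic to $T$, then $T'$ has uniform branch growth.
   Context: A metric tree is a compact connected locally connected metric space with at least two points where any two points are joined by a unique arc. Branches of $T$ at $p$: components of $T\setminus\{p\}$; $p$ is a branch point if there are at least three. For a branch point label the branches $B^1_T(p),B^2_T(p),\dots$ so that diameters are non-increasing. $T$ has uniform branch growth if there is $C\ge1$ with $\mathrm{diam}B^i_T(p)\ge C^{-1}\mathrm{diam}B^3_T(p)$ for all branch points $p$ and all $i\ge3$. A homeomorphism $f:X\to Y$ is quasisymmetric if there is a homeomorphism $\eta:[0,\infty)\to[0,\infty)$ with $d_Y(f(x),f(a))/d_Y(f(x),f(b))\le\eta(d_X(x,a)/d_X(x,b))$ for all $x,a,b$ with $x\ne b$. *)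

(* Defs.v *)
From HB Require Import structures.
From mathcomp Require Import all_boot all_order all_algebra.
From mathcomp Require Import all_classical all_reals all_analysis.
Set Implicit Arguments. Unset Strict Implicit. Unset Printing Implicit Defensive.
Import Order.TTheory GRing.Theory Num.Theory.
Import numFieldTopology.Exports.
Local Open Scope classical_set_scope.
Local Open Scope ring_scope.

Section Defs.
Context {R : realType}.

Definition diam {T : metricType R} (A : set T) : R :=
  sup [set d | exists x y, [/\ A x, A y & d = mdist x y]].

Definition locally_connected_space (T : topologicalType) : Prop :=
  forall (x : T) (U : set T), open U -> U x ->
    exists V : set T, [/\ open V, connected V, V x & V `<=` U].

(* A is an arc from x to y: image of [0,1] under a continuous injective map
   sending 0 to x and 1 to y (continuous injections of [0,1] into a metric,
   hence Hausdorff, space are embeddings). *)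
Definition is_arc {T : metricType R} (x y : T) (A : set T) : Prop :=
  exists g : R -> T,
    [/\ {within `[0, 1]%classic, continuous g},
        (forall s t, `[0, 1]%classic s -> `[0, 1]%classic t -> g s = g t -> s = t),
        g 0 = x, g 1 = y & A = g @` `[0, 1]].

Definition metric_tree (T : metricType R) : Prop :=
  [/\ compact [set: T], connected [set: T], locally_connected_space T,
      (exists x y : T, x <> y) &
      (forall x y : T, x <> y ->
         (exists A, is_arc x y A) /\
         (forall A B, is_arc x y A -> is_arc x y B -> A = B))].

Definition branches {T : metricType R} (p : T) : set (set T) :=
  [set B | exists x, x <> p /\ B = connected_component (~` [set p]) x].

Definition branch_point {T : metricType R} (p : T) : Prop :=
  exists B1 B2 B3, [/\ branches p B1, branches p B2 & branches p B3] /\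
                    [/\ B1 <> B2, B1 <> B3 & B2 <> B3].

Definition lab_index (N : option nat) (i : nat) : Prop :=
  (1 <= i)%N /\ (if N is Some n then (i <= n)%N else True).

Definition branch_labeling {T : metricType R} (p : T) (N : option nat)
    (b : nat -> set T) : Prop :=
  [/\ (forall i, lab_index N i -> branches p (b i)),
      (forall i j, lab_index N i -> lab_index N j -> b i = b j -> i = j),
      (forall B, branches p B -> exists i, lab_index N i /\ b i = B) &
      (forall i j, lab_index N i -> lab_index N j -> (i <= j)%N ->
         diam (b j) <= diam (b i))].

Definition uniform_branch_growth (T : metricType R) : Prop :=
  exists C : R, 1 <= C /\
    forall (p : T), branch_point p ->
    forall N b, branch_labeling p N b ->
    forall i, (3 <= i)%N -> lab_index N i ->
      C^-1 * diam (b 3%N) <= diam (b i).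

Definition homeo_nonneg (eta : R -> R) : Prop :=
  exists eta' : R -> R,
    [/\ {within `[0%R, +oo[, continuous eta},
        {within `[0%R, +oo[, continuous eta'} &
        forall t, 0 <= t ->
          [/\ 0 <= eta t, 0 <= eta' t, eta' (eta t) = t & eta (eta' t) = t]].

Definition homeomorphism {X Y : topologicalType} (f : X -> Y) : Prop :=
  exists g : Y -> X, [/\ continuous f, continuous g, cancel f g & cancel g f].

Definition quasisymmetric {X Y : metricType R} (f : X -> Y) : Prop :=
  homeomorphism f /\
  exists eta : R -> R, homeo_nonneg eta /\
    forall x a b : X, x <> b ->
      mdist (f x) (f a) / mdist (f x) (f b) <= eta (mdist x a / mdist x b).

End Defs.

(* Main.v *)
Require Import Defs.
From HB Require Import structures.
From mathcomp Require Import all_boot all_order all_algebra.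
From mathcomp Require Import all_classical all_reals all_analysis.
From mathcomp Require Import lra zify.
Set Implicit Arguments. Unset Strict Implicit. Unset Printing Implicit Defensive.
Import Order.TTheory GRing.Theory Num.Theory.
Import numFieldTopology.Exports.
Local Open Scope classical_set_scope.
Local Open Scope ring_scope.

Definition labb (N : option nat) (i : nat) : bool :=
  (1 <= i)%N && (if N is Some n then (i <= n)%N else true).

Lemma count_lt (P Q : pred nat) s x : (forall i, P i -> Q i) -> x \in s -> Q x ->
  ~~ P x -> (count P s < count Q s)%N.
Proof.
move=> PQ; elim: s => [//|y s IH] /=; rewrite in_cons => /orP[/eqP ->|xs] Qx Px.
  by rewrite (negbTE Px) Qx add0n add1n ltnS sub_count.
have := IH xs Qx Px; case: (boolP (P y)) => Py; first by rewrite (PQ _ Py) /=; lia.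
by move=> h; apply: leq_trans h _; apply: leq_addl.
Qed.

Lemma count_split (P : pred nat) j s :
  count P s = (count (fun i => P i && (i != j)) s + count (fun i => P i && (i == j)) s)%N.
Proof.
elim: s => [//|y s IH] /=; rewrite IH.
by case: (P y); case: (y == j) => /=; lia.
Qed.

Section Sorting.
Context {R : realType}.

Lemma sort_label (N : option nat) (a : nat -> R) :
  (forall j, labb N j -> exists M, forall k, labb N k -> a j <= a k -> (k <= M)%N) ->
  exists s : nat -> nat,
   [/\ forall r, labb N r -> labb N (s r),
       forall r r', labb N r -> labb N r' -> s r = s r' -> r = r',
       forall j, labb N j -> exists r, labb N r /\ s r = j &
       forall r r', labb N r -> labb N r' -> (r <= r')%N -> a (s r') <= a (s r)].
Proof.
move=> HM.
pose prec j k := (a k < a j) || ((a k == a j) && (j < k)%N).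
have prec_irr j : ~~ prec j j by rewrite /prec ltxx eqxx ltnn.
have prec_le j k : prec j k -> a k <= a j.
  by rewrite /prec => /orP[/ltW //|/andP[/eqP -> _]].
have prec_trans i j k : prec i j -> prec j k -> prec i k.
  rewrite /prec => /orP[ji|/andP[/eqP ji ij]] /orP[kj|/andP[/eqP kj jk]].
  - by rewrite (lt_trans kj ji).
  - by rewrite kj ji.
  - by rewrite -ji kj.
  - by rewrite kj ji eqxx (ltn_trans ij jk) orbT.
have prec_tot j k : j != k -> prec j k || prec k j.
  move=> jk; rewrite /prec; case: (ltgtP (a k) (a j)) => /=; rewrite ?orbT //.
  move=> e /=; case: (ltngtP j k) => /=; rewrite ?orbT //.
  by move=> e'; rewrite e' eqxx in jk.
have [Mf HMf] : {Mf : nat -> nat & forall j, labb N j ->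
    forall k, labb N k -> a j <= a k -> (k <= Mf j)%N}.
  apply: (choice (P := fun j M => labb N j -> forall k, labb N k -> a j <= a k -> (k <= M)%N)).
  move=> j; case: (boolP (labb N j)) => lj; last by exists 0%N.
  by have [M HM'] := HM j lj; exists M.
pose cnt k L := count (fun i => labb N i && prec i k) (iota 0 L).
pose rank k := (cnt k (Mf k).+1).+1.
have cnt_stab k L : labb N k -> (Mf k < L)%N -> cnt k L = cnt k (Mf k).+1.
  move=> lk lt; rewrite /cnt -(subnKC lt) iotaD count_cat.
  rewrite [X in (_ + X)%N](@eq_in_count _ _ pred0) ?count_pred0 ?addn0 // => i.
  rewrite mem_iota => /andP[hi _] /=; apply/negbTE/negP => /andP[li pik].
  by have := HMf k lk i li (prec_le _ _ pik); rewrite leqNgt; move: hi; lia.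
have rankE k L : labb N k -> (Mf k < L)%N -> rank k = (cnt k L).+1.
  by move=> lk lt; rewrite /rank (cnt_stab k L).
have in_iota k L : labb N k -> (Mf k < L)%N -> k \in iota 0 L.
  by move=> lk lt; rewrite mem_iota add0n (leq_ltn_trans (HMf k lk k lk (lexx _))).
have R1 j k : labb N j -> labb N k -> prec j k -> (rank j < rank k)%N.
  move=> lj lk pjk; set L := (maxn (Mf j) (Mf k)).+1.
  rewrite (rankE j L) ?(rankE k L) ?ltnS ?leq_maxl ?leq_maxr //.
  apply: (count_lt (x := j)).
  - by move=> i /andP[-> pij] /=; apply: prec_trans pij pjk.
  - by apply: in_iota; rewrite // ltnS leq_maxl.
  - by rewrite lj pjk.
  - by rewrite negb_and prec_irr orbT.
have Rinj j k : labb N j -> labb N k -> rank j = rank k -> j = k.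
  move=> lj lk e; apply/eqP; apply: contraT => jk.
  case/orP: (prec_tot j k jk) => [/(R1 j k lj lk)|/(R1 k j lk lj)];
    by rewrite e ltnn.
have labb_le r i : labb N r -> (1 <= i <= r)%N -> labb N i.
  rewrite /labb; case: N {HM HMf cnt rank cnt_stab rankE in_iota R1 Rinj} => [n|] /=; lia.
have Rlab k : labb N k -> labb N (rank k).
  move=> lk; rewrite {1}/labb /rank /=; case E: N => [n|] //.
  set L := (Mf k).+1.
  have h1 : (cnt k L < count (labb N) (iota 0 L))%N.
    apply: (count_lt (x := k)) => //.
    - by move=> i /andP[].
    - exact: in_iota.
    - by rewrite negb_and prec_irr orbT.
  apply: leq_trans h1 _; rewrite -size_filter.
  rewrite -[X in (_ <= X)%N](size_iota 1 n); apply: uniq_leq_size.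
    by apply: filter_uniq; apply: iota_uniq.
  by move=> i; rewrite mem_filter !mem_iota /labb E /=; lia.
have maxex (t : seq nat) : t != [::] ->
    exists2 j, j \in t & forall i, i \in t -> i = j \/ prec i j.
  elim: t => [//|y t IH] _.
  case: t IH => [|z t] IH.
    by exists y; rewrite ?mem_seq1 // => i; rewrite mem_seq1 => /eqP ->; left.
  have [j jt Hj] := IH isT.
  case: (boolP (prec y j)) => yj.
    exists j; first by rewrite in_cons jt orbT.
    by move=> i; rewrite in_cons => /orP[/eqP ->|/Hj]; [right|].
  case: (eqVneq j y) => [ejy|jy].
    exists j; first by rewrite in_cons jt orbT.
    by move=> i; rewrite in_cons => /orP[/eqP ->|/Hj]; [left|].
  have pjy : prec j y by move: (prec_tot j y jy); rewrite (negbTE yj) orbF.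
  exists y; first by rewrite mem_head.
  move=> i; rewrite in_cons => /orP[/eqP ->|/Hj [->|ij]]; [left|right|right] => //.
  exact: prec_trans ij pjy.
have R3 k : labb N k -> (1 < rank k)%N ->
    exists j, labb N j /\ rank j = (rank k).-1.
  move=> lk c0; have {c0} c0 : (0 < cnt k (Mf k).+1)%N by move: c0; rewrite /rank ltnS.
  set P := fun i => labb N i && prec i k.
  set L := (Mf k).+1.
  have fs0 : seq.filter P (iota 0 L) != [::].
    by rewrite -size_eq0 size_filter -lt0n.
  have [j jf Hj] := maxex _ fs0.
  move: (jf); rewrite mem_filter => /andP[/andP[lj pjk] _].
  have ident i : (labb N i && prec i j) = (P i && (i != j)).
    rewrite /P; apply/idP/idP.
    - move=> /andP[li pij]; rewrite li (prec_trans _ _ _ pij pjk) /=.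
      by apply: contraNneq (prec_irr i) => e; rewrite {2}e.
    - move=> /andP[/andP[li pik] ij]; rewrite li /=.
      have : i \in seq.filter P (iota 0 L).
        rewrite mem_filter; apply/andP; split; first by rewrite /P li pik.
        rewrite mem_iota add0n /L ltnS.
        by apply: HMf => //; apply: prec_le.
      by move/Hj => [/eqP e|//]; rewrite e in ij.
  exists j; split => //.
  set L2 := (maxn (Mf k) (Mf j)).+1.
  rewrite (rankE k L2) ?(rankE j L2) ?ltnS ?leq_maxl ?leq_maxr //.
  rewrite /cnt (eq_count ident) (count_split P j).
  have -> : count (fun i => P i && (i == j)) (iota 0 L2) = 1%N.
    rewrite (@eq_count _ _ (pred1 j)); last first.
      by move=> i /=; case: (eqVneq i j) => [->|]; rewrite ?andbT ?andbF /P ?lj ?pjk.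
    rewrite count_uniq_mem ?iota_uniq // in_iota //.
    by rewrite ltnS leq_maxr.
  by rewrite addn1.
have R4 r : labb N r -> exists k, labb N k /\ rank k = r.
  move=> lr.
  have [k [lk rk]] : exists k, labb N k /\ (r <= rank k)%N.
    apply: contrapT => nk.
    have lt k : labb N k -> (rank k < r)%N.
      by move=> lk; rewrite ltnNge; apply/negP => h; apply: nk; exists k.
    have r1 : (1 <= r)%N by move: lr; rewrite /labb => /andP[].
    have : (size (map rank (iota 1 r)) <= size (iota 1 r.-1))%N.
      apply: uniq_leq_size.
        rewrite map_inj_in_uniq ?iota_uniq // => i i' hi hi'.
        apply: Rinj; apply: (labb_le r) => //.
          by move: hi; rewrite mem_iota; lia.
        by move: hi'; rewrite mem_iota; lia.
      move=> _ /mapP[i hi ->]; rewrite mem_iota.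
      have li : labb N i by apply: (labb_le r) => //; move: hi; rewrite mem_iota; lia.
      have := lt i li; rewrite /rank; lia.
    by rewrite size_map !size_iota; lia.
  move: (rank k - r)%N (subnKC rk) => d.
  elim: d k lk {rk} => [|d IH] k lk ek; first by exists k; rewrite -ek addn0.
  have [j [lj ej]] := R3 k lk (ltac:(move: lr; rewrite /labb -ek; lia)).
  by apply: (IH j lj); rewrite ej -ek; lia.
have [s Hs] := choice (fun r => (ltac:(
  case: (boolP (labb N r)) => lr; [have [k [lk rk]] := R4 r lr|];
  [exists k => _; split; [exact: lk|exact: rk]|by exists 0%N]) :
  exists j, labb N r -> labb N j /\ rank j = r)).
exists s; split.
- by move=> r /Hs [].
- move=> r r' lr lr' e; have [_ e1] := Hs r lr; have [_ e2] := Hs r' lr'.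
  by rewrite -e1 -e2 e.
- move=> j lj; exists (rank j); split; first exact: Rlab.
  have [ls es] := Hs (rank j) (Rlab j lj).
  exact: Rinj.
- move=> r r' lr lr' rr'.
  have [ls es] := Hs r lr; have [ls' es'] := Hs r' lr'.
  case: (eqVneq (s r) (s r')) => [->//|ne].
  case/orP: (prec_tot _ _ ne); first exact: prec_le.
  by move/(R1 _ _ ls' ls); rewrite es es' ltnNge rr'.
Qed.

End Sorting.

Section MetricFacts.
Context {R : realType} {T : metricType R}.

Lemma diam_ub (M : R) (A : set T) x y :
  (forall u v : T, mdist u v <= M) -> A x -> A y -> mdist x y <= diam A.
Proof.
move=> HM Ax Ay; apply: ub_le_sup; last by exists x, y.
by exists M => _ [u [v [_ _ ->]]].
Qed.

Lemma diam_le (A : set T) x c :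
  A x -> (forall u v, A u -> A v -> mdist u v <= c) -> diam A <= c.
Proof.
move=> Ax H; apply: ge_sup; first by exists (mdist x x), x, x.
by move=> _ [u [v [Au Av ->]]]; apply: H.
Qed.

Lemma diam_ge0 (M : R) (A : set T) x :
  (forall u v : T, mdist u v <= M) -> A x -> 0 <= diam A.
Proof. by move=> HM Ax; apply: le_trans (diam_ub HM Ax Ax); rewrite mdist_ge0. Qed.

Lemma cluster_seq : compact [set: T] -> forall u : nat -> T,
  exists q, forall e, 0 < e -> forall N, exists n, (N <= n)%N /\ mdist q (u n) < e.
Proof.
move=> cT u.
have [q [_ cq]] : [set: T] `&` cluster (u @ \oo) !=set0.
  by apply: cT; exact: filterT.
exists q => e e0 N.
have : (u @ \oo) [set y | exists n, (N <= n)%N /\ y = u n].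
  by exists N => // n /= Nn; exists n.
move=> /(cq _ _)/(_ (nbhsx_ballx q _ e0)) [_ [[n [Nn ->]] bq]].
by exists n; split => //; move: bq; rewrite ballEmdist.
Qed.

Lemma compact_bdd : compact [set: T] -> exists M : R, forall u v : T, mdist u v <= M.
Proof.
move=> cT; apply: contrapT => nb.
have [x0 _] : exists x0 : T, True.
  apply: contrapT => nx; apply: nb; exists 0 => u; exfalso; apply: nx; by exists u.
have H : forall n : nat, exists y : T, n%:R < mdist x0 y.
  move=> n; apply: contrapT => ny; apply: nb; exists (n%:R + n%:R) => u v.
  apply: le_trans (metric_triangle u x0 v) _; rewrite metric_sym.
  by apply: lerD; rewrite leNgt; apply/negP => h; apply: ny; eexists; exact: h.
have [u Hu] := choice H.
have [q Hq] := cluster_seq cT u.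
have [n [Nn qn]] := Hq 1 ltr01 (Num.truncn (mdist x0 q + 1)).+1.
have := Hu n; have := truncnS_gt (mdist x0 q + 1).
have := metric_triangle x0 q (u n).
have : ((Num.truncn (mdist x0 q + 1)).+1%:R <= n%:R :> R) by rewrite ler_nat.
move=> a b c d.
have : mdist x0 (u n) < mdist x0 (u n); last by rewrite ltxx.
apply: le_lt_trans b _; apply: le_lt_trans _ d.
apply: le_trans (lerD (lexx _) (ltW qn)) _.
by apply: ltW; apply: lt_le_trans c a.
Qed.

Lemma far_point (B : set T) (p x0 : T) : B x0 ->
  exists y, B y /\ diam B <= 4 * mdist p y.
Proof.
move=> Bx0; apply: contrapT => H.
have lt y : B y -> 4 * mdist p y < diam B.
  by move=> By; rewrite ltNge; apply/negP => h; apply: H; exists y.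
have : diam B <= diam B / 2.
  apply: (diam_le Bx0) => u v Bu Bv.
  apply: le_trans (metric_triangle u p v) _; rewrite metric_sym.
  have := lt u Bu; have := lt v Bv; lra.
have := lt x0 Bx0; have := mdist_ge0 p x0; lra.
Qed.

Lemma close_le_diam (M : R) (A : set T) (p x : T) :
  (forall u v : T, mdist u v <= M) -> A x ->
  (forall e, 0 < e -> exists z, A z /\ mdist p z < e) -> mdist p x <= diam A.
Proof.
move=> HM Ax Hc; apply/ler_addgt0Pr => e e0.
have [z [Az pz]] := Hc e e0.
apply: le_trans (metric_triangle p z x) _.
have := diam_ub HM Az Ax; lra.
Qed.

End MetricFacts.

Section TopFacts.

Lemma comp_open (T : topologicalType) (U : set T) x :
  locally_connected_space T -> open U -> open (connected_component U x).
Proof.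
move=> lc oU; rewrite openE => y Cy.
have Uy := connected_component_sub Cy.
have [V [oV cV Vy VU]] := lc y U oU Uy.
have -> : connected_component U x = connected_component U y.
  exact: same_connected_component.
apply: (@filterS _ _ _ V); first exact: connected_component_max.
by apply: open_nbhs_nbhs; split.
Qed.

Lemma homeo_comp (X Y : topologicalType) (h : X -> Y) (h' : Y -> X) :
  continuous h -> continuous h' -> cancel h h' -> cancel h' h ->
  forall p x, h @` connected_component (~` [set p]) x =
              connected_component (~` [set h p]) (h x).
Proof.
move=> ch ch' hK h'K p x.
have [->|xp] := pselect (x = p).
  rewrite !connected_component_out //= ?image_set0 //.
apply/seteqP; split.
  apply: connected_component_max.
  - by exists x => //; apply: connected_component_refl.
  - move=> _ [z Cz <-] /= hzp; have zp : z = p by apply: (can_inj hK).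
    exact: (connected_component_sub Cz zp).
  - apply: connected_continuous_connected; first exact: component_connected.
    exact: continuous_subspaceT.
move=> z Cz; exists (h' z); last by rewrite h'K.
have : (h' @` connected_component (~` [set h p]) (h x)) `<=`
        connected_component (~` [set p]) x.
  apply: connected_component_max.
  - by exists (h x); [apply: connected_component_refl => /= /(can_inj hK)|rewrite hK].
  - move=> _ [w Cw <-] /= hwp.
    have := connected_component_sub Cw; rewrite /= -hwp h'K; exact.
  - apply: connected_continuous_connected; first exact: component_connected.
    exact: continuous_subspaceT.
by apply; exists z.
Qed.

End TopFacts.

Section TreeFacts.
Context {R : realType} {T : metricType R}.

Lemma branch_near : connected [set: T] -> locally_connected_space T ->
  forall (p x : T), x <> p -> forall e : R, 0 < e ->
  exists z, connected_component (~` [set p]) x z /\ mdist p z < e.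
Proof.
move=> cT lc p x xp e e0; apply: contrapT => nz.
set A := connected_component (~` [set p]) x.
have Ax : A x by apply: connected_component_refl.
have clA : closure A `<=` A.
  apply: connected_component_max.
  - exact: subset_closure.
  - move=> z clz /= zp; rewrite zp in clz.
    have [w [Aw bw]] := clz _ (nbhsx_ballx p _ e0).
    by apply: nz; exists w; split => //; move: bw; rewrite ballEmdist.
  - exact/connected_closure/component_connected.
have cA : closed A.
  by rewrite closure_id; apply/seteqP; split; [exact: subset_closure|].
have oA : open A.
  apply: comp_open => //; apply: closed_openC.
  exact/accessible_closed_set1/hausdorff_accessible/metric_hausdorff.
have AT : A = [set: T].
  apply: cT; first by exists x.
  - by exists A => //; rewrite setTI.
  - by exists A => //; rewrite setTI.
have : A p by rewrite AT.
by move/connected_component_sub; apply.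
Qed.

Lemma big_branches_finite : compact [set: T] -> locally_connected_space T ->
  forall (p : T) (A : nat -> set T),
  (forall k, (1 <= k)%N -> exists x, x <> p /\ A k = connected_component (~` [set p]) x) ->
  (forall k k', (1 <= k)%N -> (1 <= k')%N -> A k = A k' -> k = k') ->
  forall e, 0 < e -> exists M, forall k, (1 <= k)%N -> e <= diam (A k) -> (k <= M)%N.
Proof.
move=> cT lc p A HA Ainj e e0; apply: contrapT => H.
have H1 : forall M, exists k, [/\ (1 <= k)%N, (M < k)%N & e <= diam (A k)].
  move=> M; apply: contrapT => nk; apply: H; exists M => k k1 ek.
  by rewrite leqNgt; apply/negP => Mk; apply: nk; exists k; split.
have [h Hh] := choice H1.
have H2 : forall M, exists y, A (h M) y /\ e <= 4 * mdist p y.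
  move=> M; have [k1 _ ek] := Hh M; have [x [xp Ax]] := HA (h M) k1.
  have Ahx : A (h M) x by rewrite Ax; exact: connected_component_refl.
  have [y [Ay dy]] := far_point p Ahx.
  by exists y; split => //; apply: le_trans ek dy.
have [y Hy] := choice H2.
have [q Hq] := cluster_seq cT y.
have e4 : 0 < e / 4 by lra.
have qp : q <> p.
  move=> qp; have [n [_ qn]] := Hq (e/4) e4 0%N; rewrite qp in qn.
  have [_ h'] := Hy n; lra.
set B := connected_component (~` [set p]) q.
have oB : open B.
  apply: comp_open => //; apply: closed_openC.
  exact/accessible_closed_set1/hausdorff_accessible/metric_hausdorff.
have Bq : B q by apply: connected_component_refl.
have [d d0 Bd] : nbhs_ball q B.
  by apply/nbhs_ballP; apply: open_nbhs_nbhs; split.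
have inB n : mdist q (y n) < d -> A (h n) = B.
  move=> qn; have [k1 _ _] := Hh n; have [x [xp Ax]] := HA (h n) k1.
  have [Ayn _] := Hy n.
  have Byn : B (y n) by apply: Bd; rewrite ballEmdist.
  rewrite Ax in Ayn *.
  rewrite (same_connected_component Ayn) /B (same_connected_component Byn) //.
have [n0 [_ q0]] := Hq d d0 0%N.
have [n1 [n01 q1]] := Hq d d0 (h n0).+1.
have [k0 _ _] := Hh n0; have [k1 hn1 _] := Hh n1.
have := Ainj (h n0) (h n1) k0 k1; rewrite inB // inB // => /(_ erefl).
lia.
Qed.

End TreeFacts.

Section QSEst.
Context {R : realType} {T T' : metricType R}.

Lemma qs_est (f : T -> T') (eta : R -> R) (M M' C K : R) (p : T) (Am Ai : set T) :
  continuous f -> injective f ->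
  (forall x a b : T, x <> b ->
     mdist (f x) (f a) / mdist (f x) (f b) <= eta (mdist x a / mdist x b)) ->
  (forall t, 0 <= t <= 4 * C -> eta t <= K) -> 0 <= C -> 0 <= K ->
  (forall u v : T, mdist u v <= M) -> (forall u v : T', mdist u v <= M') ->
  (exists x, Am x) -> (exists y, Ai y) -> (forall y, Ai y -> y <> p) ->
  (forall e, 0 < e -> exists z, Am z /\ mdist p z < e) ->
  (forall e, 0 < e -> exists z, Ai z /\ mdist p z < e) ->
  diam Am <= C * diam Ai ->
  diam (f @` Am) <= 2 * K * diam (f @` Ai).
Proof.
move=> cf finj Hqs Heta C0 K0 HM HM' [x0 Amx0] [y0 Aiy0] Aip clm cli hd.
have [y [Aiy dy]] := far_point p Aiy0.
have yp : y <> p := Aip y Aiy.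
have pyp : 0 < mdist p y by rewrite mdist_gt0; apply/eqP => e; apply: yp.
have fpyp : 0 < mdist (f p) (f y).
  by rewrite mdist_gt0; apply/eqP => /finj e; apply: yp.
have fy_le : mdist (f p) (f y) <= diam (f @` Ai).
  apply/ler_addgt0Pr => e e0.
  have := cf p (ball (f p) e) (nbhsx_ballx _ _ e0).
  move=> /nbhs_ballP [d d0 Bd].
  have [z [Aiz pz]] := cli d d0.
  have fz : mdist (f p) (f z) < e.
    by have := Bd z; rewrite ballEmdist /= ballEmdist /=; apply.
  apply: le_trans (metric_triangle (f p) (f z) (f y)) _.
  have := @diam_ub _ _ M' (f @` Ai) (f z) (f y) HM' (imageP _ Aiz) (imageP _ Aiy).
  lra.
have key x : Am x -> mdist (f p) (f x) <= K * mdist (f p) (f y).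
  move=> Amx.
  have px := close_le_diam HM Amx clm.
  have r0 : 0 <= mdist p x / mdist p y by rewrite divr_ge0 // mdist_ge0.
  have r1 : mdist p x / mdist p y <= 4 * C.
    rewrite ler_pdivrMr //.
    have h : C * diam Ai <= C * (4 * mdist p y) by apply: ler_wpM2l.
    have e : C * (4 * mdist p y) = 4 * C * mdist p y by rewrite mulrA [C * 4]mulrC.
    by apply: le_trans px _; apply: le_trans hd _; rewrite -e.
  have := Hqs p x y (fun e => yp (esym e)).
  rewrite ler_pdivrMr // => h; apply: le_trans h _.
  apply: ler_wpM2r; first exact: mdist_ge0.
  by apply: Heta; rewrite r0 r1.
apply: (diam_le (imageP _ Amx0)) => _ _ [u Amu <-] [v Amv <-].
apply: le_trans (metric_triangle (f u) (f p) (f v)) _; rewrite metric_sym.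
have := key u Amu; have := key v Amv.
have : K * mdist (f p) (f y) <= K * diam (f @` Ai) by apply: ler_wpM2l.
lra.
Qed.

End QSEst.

Lemma labP (N : option nat) i : lab_index N i <-> labb N i.
Proof.
rewrite /lab_index /labb; case: N => [n|] /=; split.
- by move=> [-> ->].
- by move=> /andP[-> ->].
- by move=> [-> _].
- by rewrite andbT.
Qed.

Lemma imgK (X Y : Type) (f : X -> Y) (g : Y -> X) (B : set Y) :
  cancel g f -> f @` (g @` B) = B.
Proof.
move=> gK; apply/seteqP; split; first by move=> _ [_ [x Bx <-] <-]; rewrite gK.
by move=> y By; exists (g y); [exists y|rewrite gK].
Qed.

Lemma lab_le (N : option nat) r i : lab_index N r -> (1 <= i <= r)%N -> lab_index N i.
Proof. by rewrite /lab_index; case: N => [n|] /=; lia. Qed.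

Theorem lemma2p7 (R : realType) (T T' : metricType R) :
  metric_tree T -> uniform_branch_growth T ->
  (exists f : T -> T', quasisymmetric f) ->
  uniform_branch_growth T'.
Proof.
move=> [cT conT lcT _ _] [C [C1 HC]].
move=> [f [[g [cf cg fK gK]] [eta [[eta' [ceta _ Heta]] Hqs]]]].
have [MT HMT] := compact_bdd cT.
have cT' : compact [set: T'].
  have -> : [set: T'] = f @` [set: T].
    by apply/seteqP; split => // y _; exists (g y); rewrite ?gK.
  by apply: continuous_compact => //; apply: continuous_subspaceT.
have [MT' HMT'] := compact_bdd cT'.
have C0 : 0 <= C by lra.
have [c c_in Hc] : exists2 c, c \in `[0, 4 * C] & forall t, t \in `[0, 4 * C] -> eta t <= eta c.
  apply: EVT_max; first lra.
  apply: continuous_subspaceW ceta => t /=; rewrite !in_itv /= => /andP[-> _] //.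
set K := eta c.
have c0 : 0 <= c by move: c_in; rewrite in_itv /= => /andP[].
have K0 : 0 <= K by have [] := Heta c c0.
have HK t : 0 <= t <= 4 * C -> eta t <= K.
  by move=> ht; apply: Hc; rewrite in_itv /=.
exists (1 + 2 * K); split; first lra.
move=> p' bp' N b' [bl1 bl2 bl3 bl4] i i3 li.
set p := g p'.
have fp : f p = p' by rewrite /p gK.
have finj : injective f := can_inj fK.
have ginj : injective g := can_inj gK.
pose A j := g @` b' j.
have fA j : f @` A j = b' j by rewrite /A imgK.
have brA j : lab_index N j -> exists x, x <> p /\ A j = connected_component (~` [set p]) x.
  move/bl1 => [x' [x'p e]]; exists (g x'); split.
    by move/ginj.
  by rewrite /A e (homeo_comp cg cf gK fK).
have Ainj j k : lab_index N j -> lab_index N k -> A j = A k -> j = k.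
  by move=> lj lk e; apply: bl2 => //; rewrite -(fA j) -(fA k) e.
have clo j : lab_index N j -> forall e, 0 < e -> exists z, A j z /\ mdist p z < e.
  by move=> /brA [x [xp ->]]; apply: branch_near.
have ne j : lab_index N j -> exists x, A j x.
  by move=> /brA [x [xp ->]]; exists x; apply: connected_component_refl.
have nonp j : lab_index N j -> forall y, A j y -> y <> p.
  by move=> /brA [x [xp ->]] y /connected_component_sub.
have apos j : lab_index N j -> 0 < diam (A j).
  move=> /brA [x [xp ->]].
  have dp : 0 < mdist p x by rewrite mdist_gt0; apply/eqP => e; apply: xp.
  have [z [Az pz]] := branch_near conT lcT xp dp.
  have zx : 0 < mdist x z.
    by rewrite mdist_gt0; apply/eqP => e; rewrite e ltxx in pz.
  apply: lt_le_trans zx _; apply: (diam_ub HMT) => //.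
  exact: connected_component_refl.
pose a j := diam (A j).
have Hfin : forall j, labb N j -> exists M, forall k, labb N k -> a j <= a k -> (k <= M)%N.
  move=> j lj; case E : N => [n|].
    by exists n => k; rewrite /labb => /andP[].
  have lN k : (1 <= k)%N -> lab_index N k by rewrite E.
  have [M HM] := big_branches_finite cT lcT (p := p) (A := A)
    (fun k k1 => brA k (lN k k1)) (fun k k' k1 k1' => Ainj k k' (lN k k1) (lN k' k1'))
    (apos j (proj2 (labP N j) lj)).
  by exists M => k; rewrite /labb /= andbT; apply: HM.
have [s [s1 s2 s3 s4]] := sort_label Hfin.
pose b r := A (s r).
have blab : branch_labeling p N b.
  split.
  - move=> r /labP /s1 /labP /brA [x [xp e]].
    by exists x; split.
  - move=> r r' /labP lr /labP lr' e; apply: s2 => //.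
    by apply: Ainj => //; apply/labP; apply: s1.
  - move=> B [x [xp ->]].
    have : branches p' (f @` connected_component (~` [set p]) x).
      exists (f x); split; first by rewrite -fp => /finj.
      by rewrite (homeo_comp cf cg fK gK) fp.
    move=> /bl3 [j [lj ej]].
    have [r [lr sr]] := s3 j (proj1 (labP N j) lj).
    exists r; split; first exact/labP.
    by rewrite /b sr /A ej imgK.
  - move=> r r' /labP lr /labP lr' rr'; exact: s4.
have bp : branch_point p.
  move: bp' => [B1 [B2 [B3 [[h1 h2 h3] [d12 d13 d23]]]]].
  have brg B : branches p' B -> branches p (g @` B).
    move=> [x' [x'p ->]]; exists (g x'); split; first by move/ginj.
    by rewrite (homeo_comp cg cf gK fK).
  have dg B B' : B <> B' -> g @` B <> g @` B'.
    move=> dB e; apply: dB; have := congr1 (fun X => f @` X) e.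
    by rewrite !imgK.
  by exists (g @` B1), (g @` B2), (g @` B3); split; split; auto.
have HCb := HC p bp N b blab.
have l3 : lab_index N 3 by apply: (lab_le li); lia.
have l1 : lab_index N 1 by apply: (lab_le l3).
have l2 : lab_index N 2 by apply: (lab_le l3).
have [r1 [lr1 sr1]] := s3 1%N (proj1 (labP N 1) l1).
have [r2 [lr2 sr2]] := s3 2%N (proj1 (labP N 2) l2).
have [r3 [lr3 sr3]] := s3 3%N (proj1 (labP N 3) l3).
have [m [r [m13 lr sr r3le]]] : exists m r, [/\ (1 <= m <= 3)%N, labb N r, s r = m & (3 <= r)%N].
  have n12 : r1 != r2 by apply/eqP => e; move: sr2; rewrite -e sr1.
  have n13 : r1 != r3 by apply/eqP => e; move: sr3; rewrite -e sr1.
  have n23 : r2 != r3 by apply/eqP => e; move: sr3; rewrite -e sr2.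
  have g1 : (1 <= r1)%N by move: lr1; rewrite /labb => /andP[].
  have g2 : (1 <= r2)%N by move: lr2; rewrite /labb => /andP[].
  have g3 : (1 <= r3)%N by move: lr3; rewrite /labb => /andP[].
  case: (leqP 3 r1) => h1; first by exists 1%N, r1.
  case: (leqP 3 r2) => h2; first by exists 2%N, r2.
  case: (leqP 3 r3) => h3; first by exists 3%N, r3.
  exfalso; move: n12 n13 n23; lia.
have lm : lab_index N m by apply: (lab_le l3).
have [ri [lri sri]] := s3 i (proj1 (labP N i) li).
have d3 : diam (A m) <= diam (b 3%N).
  by rewrite /b -sr; apply: s4 => //; apply/labP.
have diam_i0 : 0 <= diam (A i).
  by have [x Ax] := ne i li; apply: (diam_ge0 HMT Ax).
have hd : diam (A m) <= C * diam (A i).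
  apply: le_trans d3 _.
  case: (leqP 3 ri) => hri.
    have := HCb ri hri (proj2 (labP N ri) lri).
    rewrite /b sri ler_pdivrMl //; lra.
  have h : diam (b 3%N) <= diam (b ri).
    by apply: s4 => //; [apply/labP|apply: ltnW].
  move: h; rewrite /b sri => h.
  apply: le_trans h _; rewrite -[X in X <= _]mul1r; apply: ler_wpM2r => //.
have key := qs_est cf finj Hqs HK C0 K0 HMT HMT' (ne m lm) (ne i li) (nonp i li)
  (clo m lm) (clo i li) hd.
rewrite !fA in key.
have hm3 : diam (b' 3%N) <= diam (b' m).
  by apply: bl4 => //; case/andP: m13.
have di0 : 0 <= diam (b' i).
  by have [x Ax] := ne i li; apply: (diam_ge0 HMT' (x := f x)); rewrite -fA; exists x.
rewrite ler_pdivrMl; last lra.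
have : 2 * K * diam (b' i) <= 2 * K * diam (b' i) + diam (b' i) by lra.
rewrite mulrDl mul1r; lra.
Qed.
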